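(* Let $\mathcal{N}$ be a fully-connected feed-forward network with layer widths $n_0=d,n_1,\dots,n_H=1$, mass $\Psi=\prod_{i=0}^H n_i$ and with weight set $\mathcal{W}=\{w_1,\dots,w_N\}$ of real numbers, whose expected output is \[ Y_N = q\sum_{i_1,\dots,i_H=1}^{N}\ \sum_{j=1}^{r_{i_1,\dots,i_H}} X^{(j)}_{i_1,\dots,i_H}\,\rho\prod_{k=1}^H w_{i_k}, \] where $q=\Psi^{-(H-1)/(2H)}$, $\rho\in(0,1]$, $r_{i_1,\dots,i_H}\in\{0,1\}$ indicates whether the ordered weight configuration $(w_{i_1},\dots,w_{i_H})$ is the sequence of weights along some input-to-output path (so $\sum r_{i_1,\dots,i_H}=\Psi$), and the $X^{(j)}_{i_1,\dots,i_H}$ are independent $N(0,1)$ random variables. Let $\mathcal{M}$ be an $(s,\epsilon)$-reduction image of $\mathcal{N}$ for some $s\le N$ and $\epsilon\in[0,0.5]$, and let $Y_s$ be the expected output of $\mathcal{M}$ (defined by the same formula with $\mathcal{M}$'s edge weights). Then \[ \mathrm{corr}(\mathrm{sign}(Y_s),\mathrm{sign}(Y_N))\ \ge\ \frac{1-2\epsilon}{1+2\epsilon}, \] where $\mathrm{corr}(A,B)=\frac{\mathbb{E}[(A-\mathbb{E}A)(B-\mathbb{E}B)]}{\mathrm{std}(A)\,\mathrm{std}(B)}$.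
   Context: A network $\mathcal{M}$ is an $(s,\epsilon)$-reduction image of $\mathcal{N}$ (for $\epsilon\in[0,1]$) if it has the same graph of connections as $\mathcal{N}$ but its edge weights take only $s\le N$ distinct values, and the prediction accuracies of $\mathcal{N}$ and $\mathcal{M}$ differ by no more than $\epsilon$, i.e. they classify at most an $\epsilon$ fraction of data points differently (the prediction being the sign of the output; $\mathrm{sign}(Y_s)$ and $\mathrm{sign}(Y_N)$ are random, with randomness coming from the inputs $X$). *)

(* Defs.v *)
From HB Require Import structures.
From mathcomp Require Import all_boot all_order all_algebra.
From mathcomp Require Import all_classical all_reals all_analysis.
Set Implicit Arguments. Unset Strict Implicit. Unset Printing Implicit Defensive.
Import Order.TTheory GRing.Theory Num.Theory.
Local Open Scope classical_set_scope.
Local Open Scope ring_scope.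

(* The weight of the edge from node a
   of layer k-1 to node b of layer k (1 <= k <= H, a < n (k-1), b < n k) is
   w k a b. *)

Definition npath (n : nat -> nat) (H : nat) := {dffun forall k : 'I_H.+1, 'I_(n k)}.

Definition path_weight {R : realType} (n : nat -> nat) (H : nat)
  (w : nat -> nat -> nat -> R) (p : npath n H) : R :=
  \prod_(k < H) w k.+1 (p (widen_ord (leqnSn H) k) : nat) (p (lift ord0 k) : nat).

Definition mass (n : nat -> nat) (H : nat) : nat := \prod_(i < H.+1) n i.

Definition qcoef {R : realType} (n : nat -> nat) (H : nat) : R :=
  powR ((mass n H)%:R) (- ((H%:R - 1) / (2 * H%:R))).

Definition output {R : realType} {T : Type} (n : nat -> nat) (H : nat) (rho : R)
  (w : nat -> nat -> nat -> R) (X : npath n H -> T -> R) : T -> R :=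
  fun t => qcoef n H * \sum_(p : npath n H) X p t * rho * path_weight w p.

Arguments output {R T n H} rho w X _.

Definition edges (n : nat -> nat) (H : nat) : seq (nat * nat * nat) :=
  flatten [seq [seq (k, a, b) | a <- iota 0 (n k.-1), b <- iota 0 (n k)] | k <- iota 1 H].

Definition nweights (n : nat -> nat) (H : nat) : nat := size (edges n H).

Definition ndistinct {R : realType} (n : nat -> nat) (H : nat)
  (w : nat -> nat -> nat -> R) : nat :=
  size (undup [seq w e.1.1 e.1.2 e.2 | e <- edges n H]).

Definition std_normal {d} {T : measurableType d} {R : realType}
  (P : probability T R) (X : T -> R) : Prop :=
  measurable_fun setT X /\
  forall B : set R, measurable B -> P (X @^-1` B) = normal_prob 0 1 B.

Definition mutually_independent {d} {T : measurableType d} {R : realType}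
  (I : finType) (P : probability T R) (X : I -> T -> R) : Prop :=
  forall B : I -> set R, (forall i, measurable (B i)) ->
    P (\bigcap_(i in [set: I]) (X i @^-1` B i)) =
    (\prod_(i : I) P (X i @^-1` B i))%E.

Definition rsign {R : realType} {T : Type} (Y : T -> R) : T -> R :=
  fun t => Num.sg (Y t).

Definition corr {d} {T : measurableType d} {R : realType}
  (P : probability T R) (A B : T -> R) : R :=
  fine (covariance P A B) /
    (Num.sqrt (fine (variance P A)) * Num.sqrt (fine (variance P B))).

(* M (weights w') is an (s,eps)-reduction image of N (weights w): same graph
   (same widths, fully connected), at most s <= N distinct weight values, and
   the predictions sign(Y_s), sign(Y_N) differ with probability <= eps. *)
Definition reduction_image {d} {T : measurableType d} {R : realType}
  (P : probability T R) (n : nat -> nat) (H : nat) (rho : R)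
  (X : npath n H -> T -> R) (w w' : nat -> nat -> nat -> R) (s : nat) (eps : R)
  : Prop :=
  [/\ (s <= nweights n H)%N, (ndistinct n H w' <= s)%N, 0 <= eps <= 1 &
   (P [set t | rsign (output rho w' X) t != rsign (output rho w X) t]
      <= eps%:E)%E].

(* Main.v *)
Require Import Defs.
From HB Require Import structures.
From mathcomp Require Import all_boot all_order all_algebra.
From mathcomp Require Import all_classical all_reals all_analysis.
Import Order.TTheory GRing.Theory Num.Theory.
Import measurable_realfun.
From mathcomp Require Import lra ring.
Local Open Scope classical_set_scope.
Local Open Scope ring_scope.
Set Implicit Arguments. Unset Strict Implicit. Unset Printing Implicit Defensive.

Section rlaw.
Local Open Scope ereal_scope.
Context d d' (T : measurableType d) (T' : measurableType d') (R : realType)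
  (P : probability T R) (D : set T) (mD : measurable D) (f : T -> T')
  (mf : measurable_fun setT f).

Definition rlaw (_ : measurable D) (_ : measurable_fun setT f) : set T' -> \bar R :=
  fun A => P (f @^-1` A `&` D).

Let mpre A : measurable A -> measurable (f @^-1` A `&` D).
Proof. by move=> mA; apply: measurableI => //; rewrite -[_ @^-1` _]setTI; exact: mf. Qed.

Let rlaw0 : rlaw mD mf set0 = 0.
Proof. by rewrite /rlaw preimage_set0 set0I measure0. Qed.

Let rlaw_ge0 A : 0 <= rlaw mD mf A.
Proof. by []. Qed.

Let rlaw_sigma_additive : semi_sigma_additive (rlaw mD mf).
Proof.
move=> F mF tF mUF; rewrite /rlaw preimage_bigcup setI_bigcupl.
apply: measure_semi_sigma_additive.
- by move=> n; exact: mpre.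
- apply/trivIsetP => /= i j _ _ ij; rewrite setIACA -preimage_setI.
  by move/trivIsetP : tF => /(_ _ _ _ _ ij) ->//; rewrite preimage_set0 set0I.
- by rewrite -setI_bigcupl -preimage_bigcup; exact: mpre.
Qed.

HB.instance Definition _ := isMeasure.Build _ _ _
  (rlaw mD mf) rlaw0 rlaw_ge0 rlaw_sigma_additive.

Let rlaw_fin : fin_num_fun (rlaw mD mf).
Proof. by move=> A mA; rewrite fin_num_measure//; exact: mpre. Qed.

HB.instance Definition _ := @Measure_isFinite.Build _ T' _ (rlaw mD mf) rlaw_fin.
End rlaw.
Section Nm.
Context (R : realType).
Definition Nm : set R -> \bar R := fun A => normal_prob (0:R) 1 A.
Let N0 : Nm set0 = 0%E. Proof. exact: measure0. Qed.
Let Nge0 A : (0 <= Nm A)%E. Proof. exact: measure_ge0. Qed.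
Let Nsa : semi_sigma_additive Nm.
Proof. move=> F mF tF mU. exact: (@measure_semi_sigma_additive _ _ _ (normal_prob (0:R) 1) F mF tF mU). Qed.
HB.instance Definition _ := isMeasure.Build _ R R Nm N0 Nge0 Nsa.
Let NT : Nm setT = 1%E. Proof. exact: probability_setT. Qed.
HB.instance Definition _ := Measure_isProbability.Build _ R R Nm NT.
End Nm.
Section Nfacts.
Context (R : realType).
Local Open Scope ereal_scope.
Lemma Nm_set1 (x : R) : Nm [set x] = 0.
Proof.
rewrite /Nm; apply: (@normal_prob_dominates R 0 1 [set x]) => //.
  by move=> A mA Ax; apply/eqP; rewrite eq_le measure_ge0 andbT -(lebesgue_measure_set1 x) le_measure// inE//; exact: measurable_set1.
Qed.

Lemma normal_pdf_even (x : R) : normal_pdf 0 1 (- x) = normal_pdf 0 1 x.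
Proof. by rewrite /normal_pdf oner_eq0 /normal_fun !subr0 sqrrN. Qed.

Lemma Nm_sym (B : set R) : measurable B -> Nm (-%R @^-1` B) = Nm B.
Proof.
move=> mB; rewrite /Nm /normal_prob.
have mN : measurable_fun [set: measurableTypeR R] (-%R : measurableTypeR R -> measurableTypeR R).
  exact: oppr_measurable.
transitivity (\int[lebesgue_measure]_(x in (-%R : measurableTypeR R -> measurableTypeR R) @^-1` B)
   (((fun x => (normal_pdf 0 1 x)%:E) \o (-%R : measurableTypeR R -> measurableTypeR R)) x)).
  by apply: eq_integral => x _ /=; rewrite normal_pdf_even.
rewrite -(ge0_integral_pushforward mN) //.
- apply: eq_measure_integral => //= A mA _; exact: lebesgue_measureN.
- apply/measurable_EFinP; exact: (measurable_funS measurableT (@subsetT _ B) (measurable_normal_pdf 0 1)).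
- by move=> y _; rewrite lee_fin normal_pdf_ge0.
Qed.
End Nfacts.

Lemma mpreT d1 d2 (T1 : measurableType d1) (T2 : measurableType d2) (g : T1 -> T2) :
  measurable_fun setT g -> forall A, measurable A -> measurable (g @^-1` A).
Proof. by move=> mg A mA; rewrite -[_ @^-1` _]setTI; exact: mg. Qed.

Section Indep.
Local Open Scope ereal_scope.
Context d (T : measurableType d) (R : realType) (P : probability T R) (I : finType)
  (X : I -> T -> R) (hX : forall i, std_normal P (X i))
  (hind : mutually_independent P X) (a : I -> R).

Definition Zs (s : seq I) : T -> R := fun t => (\sum_(i <- s) a i * X i t)%R.
Definition Rect (B : I -> set R) : set T := \bigcap_(i in [set: I]) (X i @^-1` B i).
Definition upd (B : I -> set R) (p : I) (Bp : set R) : I -> set R :=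
  fun i => if i == p then Bp else B i.

Lemma mX i : measurable_fun setT (X i). Proof. exact: (hX i).1. Qed.

Lemma mZs s : measurable_fun setT (Zs s).
Proof.
elim: s => [|i s IH].
  by have -> : Zs [::] = cst 0%R by apply/funext => t; rewrite /Zs big_nil.
have -> : Zs (i :: s) = (fun t => a i * X i t + Zs s t)%R.
  by apply/funext => t; rewrite /Zs big_cons.
apply: measurable_funD => //; apply: measurable_funM => //; exact: mX.
Qed.

Lemma mRect B : (forall i, measurable (B i)) -> measurable (Rect B).
Proof.
move=> mB; apply: fin_bigcap_measurable; first exact: finite_finset.
by move=> i _; apply: mpreT => //; exact: mX.
Qed.

Lemma PRect B : (forall i, measurable (B i)) -> P (Rect B) = \prod_(i : I) Nm (B i).
Proof.
move=> mB; rewrite /Rect hind //; apply: eq_bigr => i _; exact: (hX i).2.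
Qed.

Lemma Rect_upd B p Bp : B p = setT -> Rect (upd B p Bp) = X p @^-1` Bp `&` Rect B.
Proof.
move=> Bp1; apply/seteqP; split => t.
  move=> h; split; first by have := h p Logic.I; rewrite /upd eqxx.
  move=> i _; have := h i Logic.I; rewrite /upd; case: eqP => [->|//].
  by rewrite Bp1.
move=> [hp hr] i _; rewrite /upd; case: eqP => [->//|_]; exact: hr.
Qed.

Lemma PRect_upd B p Bp : (forall i, measurable (B i)) -> measurable Bp -> B p = setT ->
  P (Rect (upd B p Bp)) = Nm Bp * P (Rect B).
Proof.
move=> mB mBp Bp1.
have mB' : forall i, measurable (upd B p Bp i) by move=> i; rewrite /upd; case: eqP.
rewrite !PRect // (bigD1 p) //= [in RHS](bigD1 p) //= /upd eqxx Bp1 probability_setT mul1e.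
congr (_ * _); apply: eq_bigr => i /negPf ->; by [].
Qed.

Lemma Rect_setT : Rect (fun _ => setT) = setT.
Proof. by apply/seteqP; split => t // _ i _. Qed.

Lemma prod_law (U : T -> R * R) (mU : measurable_fun setT U) (D : set T) (mD : measurable D)
  (m1 : {sigma_finite_measure set R -> \bar R}) :
  (forall A B, measurable A -> measurable B ->
     P (U @^-1` (A `*` B) `&` D) = m1 A * Nm B) ->
  forall E, measurable E -> P (U @^-1` E `&` D) = (m1 \x @Nm R) E.
Proof.
move=> h E mE.
have := @product_measure_unique _ _ _ _ _ m1 (@Nm R) (rlaw P mD mU) h E mE.
by move=> ->.
Qed.

Definition Qind s := forall B : I -> set R, (forall i, measurable (B i)) ->
  (forall i, i \in s -> B i = setT) ->
  forall C, measurable C -> P (Zs s @^-1` C `&` Rect B) = P (Zs s @^-1` C) * P (Rect B).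
Definition Qsym s := forall C : set R, measurable C ->
  P (Zs s @^-1` (-%R @^-1` C)) = P (Zs s @^-1` C).
Definition Qatom s := (exists2 i, i \in s & a i != 0%R) -> P (Zs s @^-1` [set 0%R]) = 0.

Lemma Q_nil : [/\ Qind [::], Qsym [::] & Qatom [::]].
Proof.
have ZE : Zs [::] = cst 0%R by apply/funext => t; rewrite /Zs big_nil.
split.
- move=> B mB _ C mC; rewrite ZE preimage_cst.
  case: ifP => _; first by rewrite setTI probability_setT mul1e.
  by rewrite set0I measure0 mul0e.
- by move=> C mC; rewrite ZE /preimage /= oppr0.
- by case.
Qed.

Lemma Q_cons p s : p \notin s -> Qind s -> Qsym s -> Qatom s ->
  [/\ Qind (p :: s), Qsym (p :: s) & Qatom (p :: s)].
Proof.
move=> pns IHi IHs IHa.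
set Z' := Zs s.
have mZ' : measurable_fun setT Z' := mZs s.
pose V := fun t => (Z' t, X p t).
have mV : measurable_fun setT V by apply: measurable_fun_pair => //; exact: mX.
pose f := fun zx : R * R => (zx.1 + a p * zx.2)%R.
have mf : measurable_fun setT f.
  apply: measurable_funD; first exact: measurable_fst.
  by apply: measurable_funM => //; exact: measurable_snd.
have ZE : Zs (p :: s) = f \o V.
  by apply/funext => t; rewrite /Zs big_cons /= addrC.
have preE C : Zs (p :: s) @^-1` C = V @^-1` (f @^-1` C) by rewrite ZE.
have rect B A Bp : (forall i, measurable (B i)) -> (forall i, i \in p :: s -> B i = setT) ->
    measurable A -> measurable Bp ->
    P (V @^-1` (A `*` Bp) `&` Rect B) = P (Z' @^-1` A) * P (Rect B) * @Nm R Bp.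
  move=> mB hB mA mBp.
  have Bp1 : B p = setT by apply: hB; rewrite mem_head.
  have -> : V @^-1` (A `*` Bp) `&` Rect B = Z' @^-1` A `&` Rect (upd B p Bp).
    by rewrite Rect_upd // setIA.
  rewrite (IHi (upd B p Bp)) //.
  - by rewrite (PRect_upd mB mBp Bp1) [Nm Bp * _]muleC muleA.
  - by move=> i; rewrite /upd; case: eqP.
  - move=> i iis; rewrite /upd; case: eqP => [ip|_]; first by move: pns; rewrite -ip iis.
    by apply: hB; rewrite inE iis orbT.
have hT : forall i, measurable ((fun _ : I => @setT R) i) by [].
pose muT := rlaw P measurableT mZ'.
have muTE A : muT A = P (Z' @^-1` A) by rewrite /muT /rlaw setIT.
have muTE' A : (muT : {sigma_finite_measure set R -> \bar R}) A = P (Z' @^-1` A).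
  exact: muTE.
have lawT : forall E, measurable E -> P (V @^-1` E) = (muT \x @Nm R) E.
  move=> E mE; rewrite -[V @^-1` E]setIT; apply: prod_law => // A Bp mA mBp.
  have := rect (fun _ => setT) A Bp hT (fun _ _ => erefl) mA mBp.
  by rewrite Rect_setT probability_setT mule1 -muTE.
split.
- move=> B mB hB C mC.
  have mRB := mRect mB.
  pose c : {nonneg R} := NngNum (fine_ge0 (measure_ge0 P (Rect B))).
  have cE : (c%:num)%:E = P (Rect B) by rewrite /= fineK // fin_num_measure.
  have h1 : P (V @^-1` (f @^-1` C) `&` Rect B) = (mscale c muT \x @Nm R) (f @^-1` C).
    apply: (prod_law mV mRB) => [A Bp mA mBp|]; last exact: mpreT.
    rewrite rect //= /mscale cE.
    transitivity (P (Rect B) * P (Z' @^-1` A) * @Nm R Bp); first by rewrite [P (Rect B) * _]muleC.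
    by rewrite -muTE.
  have h2 : (mscale c muT \x @Nm R) (f @^-1` C) = P (Rect B) * (muT \x @Nm R) (f @^-1` C).
    rewrite /product_measure1 ge0_integral_mscale ?cE //.
    exact: measurable_fun_xsection (mpreT mf mC).
  rewrite !preE h1 h2 -lawT; last exact: mpreT.
  by rewrite muleC.
- move=> C mC.
  pose W := fun t => (- Z' t, - X p t)%R.
  have mW : measurable_fun setT W.
    apply: measurable_fun_pair; apply: measurableT_comp => //; try exact: oppr_measurable.
    exact: mX.
  have WE : Zs (p :: s) @^-1` (-%R @^-1` C) = W @^-1` (f @^-1` C).
    by rewrite ZE; apply/funext => t; rewrite /preimage /W /f /V /= opprD mulrN.
  rewrite WE preE -[W @^-1` _]setIT (prod_law (m1:=muT) mW measurableT).
    by rewrite lawT //; exact: mpreT.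
  + move=> A Bp mA mBp.
    have -> : W @^-1` (A `*` Bp) = V @^-1` ((-%R @^-1` A) `*` (-%R @^-1` Bp)) by [].
    have mnA : measurable (-%R @^-1` A) by apply: mpreT => //; exact: oppr_measurable.
    have mnB : measurable (-%R @^-1` Bp) by apply: mpreT => //; exact: oppr_measurable.
    rewrite setIT lawT; last exact: measurableX.
    rewrite product_measure1E //.
    transitivity (P (Z' @^-1` (-%R @^-1` A) `&` setT) * @Nm R (-%R @^-1` Bp)); first by [].
    rewrite setIT /Z' IHs // Nm_sym //. by rewrite -muTE.
  + exact: (mpreT mf mC).
- move=> [i iin ai].
  case: (eqVneq (a p) 0%R) => ap.
    have ZE' : Zs (p :: s) = Z' by apply/funext => t; rewrite /Zs big_cons ap mul0r add0r.
    rewrite ZE'; apply: IHa; exists i => //.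
    move: iin; rewrite inE => /orP[/eqP ip|//].
    by move: ai; rewrite ip ap eqxx.
  rewrite preE lawT; last by apply: mpreT => //; exact: measurable_set1.
  rewrite /product_measure1; apply: integral0_eq => z _ /=.
  have -> : xsection (f @^-1` [set 0%R]) z = [set (- z / a p)%R].
    apply/seteqP; split => y; rewrite /xsection /= in_setE /preimage /f /=.
      move=> h; have -> : z = (- (a p * y))%R.
        by apply/eqP; rewrite -subr_eq0 opprK h.
      by rewrite opprK mulrC mulKf.
    by move=> ->; rewrite mulrCA divff // mulr1 subrr.
  exact: Nm_set1.
Qed.

Lemma Q_all s : uniq s -> [/\ Qind s, Qsym s & Qatom s].
Proof.
elim: s => [_|p s IH /= /andP[pns us]]; first exact: Q_nil.
by have [? ? ?] := IH us; exact: Q_cons.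
Qed.

Definition Pos : set R := [set x | (0 < x)%R].
Definition Neg : set R := [set x | (x < 0)%R].

Lemma mPos : measurable Pos.
Proof.
rewrite (_ : Pos = `]0%R, +oo[%classic); first exact: measurable_itv.
by apply/seteqP; split => x /=; rewrite in_itv /= andbT.
Qed.

Lemma mNeg : measurable Neg.
Proof.
rewrite (_ : Neg = `]-oo, 0%R[%classic); first exact: measurable_itv.
by apply/seteqP; split => x /=; rewrite in_itv /=.
Qed.

Lemma key : (exists i, a i != 0%R) ->
  P (Zs (index_enum I) @^-1` [set 0%R]) = 0 /\
  P (Zs (index_enum I) @^-1` Pos) = P (Zs (index_enum I) @^-1` Neg).
Proof.
move=> [i ai]; have [_ hs ha] := Q_all (index_enum_uniq I).
split; first by apply: ha; exists i => //; rewrite mem_index_enum.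
rewrite -(hs Neg mNeg).
have -> : -%R @^-1` Neg = Pos.
  by apply/seteqP; split => x; rewrite /Neg /Pos /preimage /= oppr_lt0.
by [].
Qed.

End Indep.
Arguments Pos {R}.
Arguments Neg {R}.

Section Signs.
Local Open Scope ereal_scope.
Context d (T : measurableType d) (R : realType) (P : probability T R).

Lemma bnd_Lfun (f : T -> R) (M : R) : measurable_fun setT f ->
  (forall t, `|f t| <= M)%R -> f \in Lfun P 1.
Proof.
move=> mf hf; apply/Lfun1_integrable; apply: measurable_bounded_integrable => //.
  exact: (le_lt_trans (probability_le1 P measurableT) (ltry _)).
exists M; split; first exact: num_real.
move=> N MN x _ /=; exact: le_trans (hf x) (ltW MN).
Qed.

Lemma Lfun_ind (A : set T) : measurable A -> (\1_A : T -> R) \in Lfun P 1.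
Proof.
move=> mA; apply: (bnd_Lfun (M := 1%R)); first exact: measurable_indic.
by move=> t; rewrite indicE; case: (t \in A); rewrite ?normr1 ?normr0.
Qed.

Lemma rsignE (Y : T -> R) : rsign Y = (\1_(Y @^-1` Pos) \- \1_(Y @^-1` Neg))%R.
Proof.
apply/funext => t; rewrite /rsign /= !indicE.
case: (ltgtP (Y t) 0%R) => h.
- rewrite ltr0_sg // memNset ?mem_set //=; last by rewrite /Pos /= ltNge ltW.
  by rewrite sub0r.
- rewrite gtr0_sg // mem_set // memNset //=; last by rewrite /Neg /= ltNge ltW.
  by rewrite subr0.
- rewrite h sgr0 !memNset //= ?subrr //; by rewrite /Pos /Neg /= h ltxx.
Qed.

Lemma m_rsign (Y : T -> R) : measurable_fun setT Y -> measurable_fun setT (rsign Y).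
Proof.
move=> mY; rewrite rsignE; apply: measurable_funB; apply: measurable_indic;
  apply: mpreT => //; [exact: mPos | exact: mNeg].
Qed.

Lemma rsign_bnd (Y : T -> R) t : (`|rsign Y t| <= 1)%R.
Proof. by rewrite /rsign normr_sg; case: (Y t != 0%R). Qed.

Lemma E_rsign (Y : T -> R) : measurable_fun setT Y ->
  P (Y @^-1` Pos) = P (Y @^-1` Neg) -> 'E_P[rsign Y] = 0.
Proof.
move=> mY hs.
have mP : measurable (Y @^-1` Pos) by apply: mpreT => //; exact: mPos.
have mN : measurable (Y @^-1` Neg) by apply: mpreT => //; exact: mNeg.
rewrite rsignE expectationB ?Lfun_ind // !expectation_indic // hs.
by rewrite subee // fin_num_measure.
Qed.

Lemma E_rsign2 (Y : T -> R) : measurable_fun setT Y ->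
  P (Y @^-1` [set 0%R]) = 0 -> 'E_P[rsign Y * rsign Y] = 1.
Proof.
move=> mY h0.
have mZ : measurable (Y @^-1` [set 0%R]) by apply: mpreT => //; exact: measurable_set1.
have -> : (rsign Y * rsign Y = cst 1 \- \1_(Y @^-1` [set 0%R]))%R.
  apply/funext => t; rewrite /rsign /= indicE; change (Num.sg (Y t) * Num.sg (Y t) = 1 - (t \in Y @^-1` [set 0%R])%:R)%R.
  case: (ltgtP (Y t) 0%R) => h.
  - rewrite ltr0_sg // memNset ?subr0 ?mulrNN ?mulr1 //= => h1; by move: h; rewrite h1 ltxx.
  - rewrite gtr0_sg // memNset ?subr0 ?mulr1 //= => h1; by move: h; rewrite h1 ltxx.
  - by rewrite h sgr0 mem_set //= mulr0 subrr.
rewrite expectationB ?Lfun_cst ?Lfun_ind // expectation_cst expectation_indic // h0.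
by rewrite sube0.
Qed.

Lemma ineq_R (u v : R) (z : bool) : (`|u| <= 1)%R -> (`|v| <= 1)%R -> (u == 0%R) = z ->
  (~~ z -> `|u| = 1)%R -> (1 - 2 * (u != v)%:R - z%:R <= u * v)%R.
Proof.
move=> hu hv hz h1; case: (eqVneq u v) => [<-|huv] /=.
  rewrite mulr0 subr0; case: z hz h1 => hz h1.
    by move/eqP: hz => ->; rewrite mulr0 subrr.
  have -> : (u * u = `|u| * `|u|)%R by rewrite -normrM ger0_norm // -expr2 sqr_ge0.
  by rewrite h1 // mulr1 subr0.
have h : (- 1 <= u * v)%R.
  apply: lerNnormlW; rewrite normrM.
  by apply: mulr_ile1.
have hz0 : (0 <= (z%:R : R))%R by case: z {hz h1}.
rewrite mulr1; lra.
Qed.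

Lemma E_prod (Y1 Y2 : T -> R) : measurable_fun setT Y1 -> measurable_fun setT Y2 ->
  P (Y1 @^-1` [set 0%R]) = 0 ->
  ((1 - 2 * fine (P [set t | rsign Y1 t != rsign Y2 t]))%:E <= 'E_P[rsign Y1 * rsign Y2]).
Proof.
move=> m1 m2 h0.
set D := [set t | rsign Y1 t != rsign Y2 t].
set Z := Y1 @^-1` [set 0%R].
have mA := m_rsign m1; have mB := m_rsign m2.
have mD : measurable D.
  have -> : D = (rsign Y1 \- rsign Y2)%R @^-1` (~` [set 0%R]).
    apply/seteqP; split => t; rewrite /D /preimage /= => h.
      change (rsign Y1 t - rsign Y2 t <> 0)%R.
      by move/eqP; rewrite subr_eq0 => /eqP e; move: h; rewrite e eqxx.
    apply/eqP => e; apply: h.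
    by change (rsign Y1 t - rsign Y2 t = 0)%R; rewrite e subrr.
  apply: mpreT; first exact: measurable_funB.
  by apply: measurableC; exact: measurable_set1.
have mZ : measurable Z by apply: mpreT => //; exact: measurable_set1.
have L1 : (cst 1%R \- 2%R \o* \1_D)%R \in Lfun P 1.
  apply: (bnd_Lfun (M := 3%R)).
    apply: measurable_funB => //; apply: measurable_funM => //; exact: measurable_indic.
  move=> t /=; rewrite indicE; case: (t \in D); rewrite /= ?mul1r ?mul0r;
    apply/ler_normlP; split; lra.
have L2 : (2%R \o* \1_D : T -> R) \in Lfun P 1.
  apply: (bnd_Lfun (M := 2%R)).
    by apply: measurable_funM => //; exact: measurable_indic.
  move=> t /=; rewrite indicE; case: (t \in D); rewrite /= ?mul1r ?mul0r;
    apply/ler_normlP; split; lra.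
have LAB : (rsign Y1 * rsign Y2)%R \in Lfun P 1.
  apply: (bnd_Lfun (M := 1%R)); first exact: measurable_funM.
  move=> t; change (`|rsign Y1 t * rsign Y2 t| <= 1)%R.
  by rewrite normrM; apply: mulr_ile1 => //; exact: rsign_bnd.
have L3 : ((cst 1%R \- 2%R \o* \1_D) \- \1_Z)%R \in Lfun P 1.
  by apply: rpredB => //; exact: Lfun_ind.
have Eg : 'E_P[(cst 1%R \- 2%R \o* \1_D) \- \1_Z]%R = (1 - 2 * fine (P D))%:E.
  rewrite expectationB ?Lfun_ind // expectationB ?Lfun_cst //.
  rewrite expectationZl ?Lfun_ind // expectation_cst !expectation_indic // h0 sube0.
  by rewrite -(fineK (fin_num_measure P D mD)) -EFinM -EFinB.
rewrite -Eg !expectation.unlock.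
apply: le_integral => //.
- exact/Lfun1_integrable.
- exact/Lfun1_integrable.
move=> t _; rewrite lee_fin.
change (1 - \1_D t * 2 - \1_Z t <= rsign Y1 t * rsign Y2 t)%R; rewrite [(_ * 2)%R]mulrC.
rewrite !indicE.
have -> : (t \in D) = (rsign Y1 t != rsign Y2 t) by apply/idP/idP => h; [exact: (set_mem h) | exact: (mem_set h)].
have -> : (t \in Z) = (Y1 t == 0%R) by apply/idP/idP => h; [exact/eqP/(set_mem h) | exact: (mem_set (eqP h))].
apply: ineq_R; rewrite ?rsign_bnd //.
  by rewrite /rsign sgr_eq0.
by move=> h; rewrite /rsign normr_sg h.
Qed.

Lemma covE (A B : T -> R) : 'E_P[A] = 0 -> 'E_P[B] = 0 -> covariance P A B = 'E_P[A * B].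
Proof.
move=> hA hB; rewrite covariance.unlock hA hB /=.
by congr ('E_P[_]); congr (_ * _)%R; apply/funext => t /=; rewrite subr0.
Qed.

Lemma corr_ge (Y1 Y2 : T -> R) (eps : R) :
  measurable_fun setT Y1 -> measurable_fun setT Y2 ->
  P (Y1 @^-1` [set 0%R]) = 0 -> P (Y1 @^-1` Pos) = P (Y1 @^-1` Neg) ->
  P (Y2 @^-1` [set 0%R]) = 0 -> P (Y2 @^-1` Pos) = P (Y2 @^-1` Neg) ->
  P [set t | rsign Y1 t != rsign Y2 t] <= eps%:E ->
  (1 - 2 * eps <= corr P (rsign Y1) (rsign Y2))%R.
Proof.
move=> m1 m2 h01 hs1 h02 hs2 hD.
have E1 := E_rsign m1 hs1; have E2 := E_rsign m2 hs2.
rewrite /corr /variance !covE // (E_rsign2 m1 h01) (E_rsign2 m2 h02) /= sqrtr1 mulr1 divr1.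
have fin : 'E_P[rsign Y1 * rsign Y2] \is a fin_num.
  apply: expectation_fin_num; apply: (bnd_Lfun (M := 1%R)).
    by apply: measurable_funM; exact: m_rsign.
  move=> t; change (`|rsign Y1 t * rsign Y2 t| <= 1)%R.
  by rewrite normrM; apply: mulr_ile1 => //; exact: rsign_bnd.
have := E_prod m1 m2 h01; rewrite -(fineK fin) lee_fin => h.
set D := [set t | rsign Y1 t != rsign Y2 t] in hD h.
have finD : P D \is a fin_num.
  by rewrite ge0_fin_numE ?measure_ge0 //; exact: le_lt_trans hD (ltry _).
have hD' : (fine (P D) <= eps)%R by rewrite -lee_fin fineK.
lra.
Qed.

End Signs.

Theorem theorem3p2 (R : realType) (dT : measure_display) (T : measurableType dT)
  (P : probability T R) (H : nat) (n : nat -> nat) (rho : R)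
  (w w' : nat -> nat -> nat -> R) (X : npath n H -> T -> R) (s : nat) (eps : R) :
  (0 < H)%N ->
  (forall i, (i <= H)%N -> (0 < n i)%N) ->
  n H = 1%N ->
  0 < rho <= 1 ->
  (forall p, std_normal P (X p)) ->
  mutually_independent P X ->
  reduction_image P rho X w w' s eps ->
  0 <= eps <= 1 / 2 ->
  (0 < variance P (rsign (output rho w X)))%E ->
  (0 < variance P (rsign (output rho w' X)))%E ->
  corr P (rsign (output rho w' X)) (rsign (output rho w X))
    >= (1 - 2 * eps) / (1 + 2 * eps).
Proof.
move=> _ _ _ _ hX hind [_ _ _ hred] /andP[e0 e1] hv hv'.
pose aw (w0 : nat -> nat -> nat -> R) :=
  fun p : npath n H => (qcoef n H * rho * path_weight w0 p)%R.
have outE w0 : output rho w0 X = Zs X (aw w0) (index_enum (npath n H)).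
  apply/funext => t; rewrite /output /Zs big_distrr /=; apply: eq_bigr => p _.
  by rewrite /aw; ring.
have nz w0 : (0 < variance P (rsign (output rho w0 X)))%E -> exists i, aw w0 i != 0.
  move=> hv0; have [//|hall] := pselect (exists i, aw w0 i != 0).
  exfalso; move: hv0.
  have -> : rsign (output rho w0 X) = cst 0.
    apply/funext => t; rewrite outE /rsign /Zs big1 ?sgr0 // => i _.
    have : ~ (aw w0 i != 0) by move=> h; apply: hall; exists i.
    by move/negP/negPn/eqP ->; rewrite mul0r.
  by rewrite variance_cst ltxx.
have [h0 hs] := key hX hind (nz w hv).
have [h0' hs'] := key hX hind (nz w' hv').
apply: (@le_trans _ _ (1 - 2 * eps)).
  rewrite ler_pdivrMr; last by lra.
  nra.
apply: corr_ge => //; rewrite ?outE //; exact: mZs.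
Qed.
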